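(* Let $n,d,r\in\mathbb N$ with $p=d\ge2$, let $\lambda_i\ge0$ and $\boldsymbol x_i\in\mathbb R^n_+$ with $\|\boldsymbol x_i\|_p=1$ for $i=1,\dots,r$. Then $$\Big\|\sum_{i=1}^r\lambda_i\,\boldsymbol x_i^{\otimes d}\Big\|_{p_*}=\sum_{i=1}^r\lambda_i.$$
   Context: $\boldsymbol x^{\otimes d}=\boldsymbol x\otimes\dots\otimes\boldsymbol x$ ($d$ factors). Tensor nuclear $p$-norm: $\|\mathcal T\|_{p_*}=\min\{\sum_{i}|\mu_i|:\mathcal T=\sum_{i=1}^s\mu_i\boldsymbol y_i^1\otimes\dots\otimes\boldsymbol y_i^d,\ \|\boldsymbol y_i^k\|_p=1,\ s\in\mathbb N\}$. *)

(* Defs.v *)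
From HB Require Import structures.
From mathcomp Require Import all_boot all_order all_algebra.
From mathcomp Require Import all_classical all_reals.
From mathcomp Require Import exp.
Set Implicit Arguments. Unset Strict Implicit. Unset Printing Implicit Defensive.
Import Order.TTheory GRing.Theory Num.Theory.
Local Open Scope ring_scope.
Local Open Scope classical_set_scope.

Notation tensor R n d := {ffun {ffun 'I_d -> 'I_n} -> R^o} (only parsing).

Definition pnorm (R : realType) (n : nat) (p : R) (x : 'rV[R]_n) : R :=
  powR (\sum_(j < n) powR `|x 0 j| p) p^-1.

Definition outer (R : realType) (n d : nat) (y : 'I_d -> 'rV[R]_n) : tensor R n d :=
  [ffun f : {ffun 'I_d -> 'I_n} => \prod_(k < d) y k 0 (f k)].

Definition tpow (R : realType) (n d : nat) (x : 'rV[R]_n) : tensor R n d :=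
  outer (fun _ : 'I_d => x).

(* Tensor nuclear p-norm: infimum (the paper's min) of sum |mu_i| over all
   decompositions T = sum_i mu_i y_i^1 (x) ... (x) y_i^d with ||y_i^k||_p = 1. *)
Definition nuclear_pnorm (R : realType) (n d : nat) (p : R) (T : tensor R n d) : R :=
  inf [set v : R | exists (s : nat) (mu : 'I_s -> R) (y : 'I_s -> 'I_d -> 'rV[R]_n),
         (forall i k, pnorm p (y i k) = 1) /\
         T = \sum_(i < s) mu i *: outer (y i) /\
         v = \sum_(i < s) `|mu i|].

(* Main.v *)
Require Import Defs.
From HB Require Import structures.
From mathcomp Require Import all_boot all_order all_algebra.
From mathcomp Require Import all_classical all_reals.
From mathcomp Require Import exp.
Import Order.TTheory GRing.Theory Num.Theory.
Local Open Scope ring_scope.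

Lemma pnorm1_sum (R : realType) (n d : nat) (y : 'rV[R]_n) :
  (0 < d)%N -> pnorm (d%:R) y = 1 -> \sum_(j < n) `|y 0 j| ^+ d = 1.
Proof.
move=> d0 h.
have S0 : 0 <= \sum_(j < n) powR `|y 0 j| d%:R by apply: sumr_ge0 => j _; exact: powR_ge0.
have dn0 : (d%:R : R) != 0 by rewrite pnatr_eq0 -lt0n.
have : powR (\sum_(j < n) powR `|y 0 j| d%:R) ((d%:R)^-1 * d%:R) = 1.
  by rewrite powRrM; move: h; rewrite /pnorm => ->; rewrite powR1.
rewrite mulVf // powRr1 // => <-.
by apply: eq_bigr => j _; rewrite powR_mulrn.
Qed.

Lemma holder_d (R : realType) (n d : nat) (y : 'I_d -> 'rV[R]_n) :
  (0 < d)%N -> (forall k, pnorm (d%:R) (y k) = 1) ->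
  \sum_(j < n) \prod_(k < d) `|y k 0 j| <= 1.
Proof.
move=> d0 hy.
have dn0 : (d%:R : R) != 0 by rewrite pnatr_eq0 -lt0n.
have step : forall j : 'I_n, \prod_(k < d) `|y k 0 j| <=
    (\sum_(k < d) `|y k 0 j| ^+ d) / d%:R.
  move=> j.
  have := @leif_AGM R _ [pred k : 'I_d | true] (fun k => `|y k 0 j| ^+ d).
  move=> /(_ (fun k _ => exprn_ge0 _ (normr_ge0 _))) /leifP.
  case: ifP => _ H.
    move: H => /eqP; rewrite card_ord prodrXl => H.
    rewrite -(ler_pXn2r d0) ?H //; rewrite nnegrE.
      exact: prodr_ge0.
    by apply: divr_ge0 => //; apply: sumr_ge0 => k _; exact: exprn_ge0.
  move: H => /ltW; rewrite card_ord prodrXl => H.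
  rewrite -(ler_pXn2r d0) //; rewrite nnegrE.
    exact: prodr_ge0.
  by apply: divr_ge0 => //; apply: sumr_ge0 => k _; exact: exprn_ge0.
apply: le_trans (ler_sum _ (fun j _ => step j)) _.
rewrite -mulr_suml exchange_big /=.
rewrite (eq_bigr (fun _ => 1)); last by move=> k _; exact: pnorm1_sum.
by rewrite sumr_const card_ord divff.
Qed.

Definition diagL {R : realType} {n d : nat} (T : {ffun {ffun 'I_d -> 'I_n} -> R^o}) : R :=
  \sum_(j < n) T [ffun _ => j].

Lemma diagL_sum (R : realType) (n d s : nat) (mu : 'I_s -> R) (y : 'I_s -> 'I_d -> 'rV[R]_n) :
  diagL (\sum_(i < s) mu i *: outer (y i)) =
  \sum_(i < s) mu i * \sum_(j < n) \prod_(k < d) y i k 0 j.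
Proof.
rewrite /diagL.
under eq_bigr do rewrite sum_ffunE.
rewrite exchange_big /=; apply: eq_bigr => i _.
rewrite mulr_sumr; apply: eq_bigr => j _.
by rewrite !ffunE; congr (_ * _); apply: eq_bigr => k _; rewrite ffunE.
Qed.

Theorem corollary5p14 (R : realType) (n d r : nat) (hd : (2 <= d)%N)
  (lambda : 'I_r -> R) (x : 'I_r -> 'rV[R]_n)
  (hlam : forall i, 0 <= lambda i)
  (hxpos : forall i j, 0 <= x i 0 j)
  (hxn : forall i, pnorm (d%:R) (x i) = 1) :
  nuclear_pnorm (d%:R) (\sum_(i < r) lambda i *: tpow d (x i)) = \sum_(i < r) lambda i.
Proof.
have d0 : (0 < d)%N by apply: leq_trans hd.
rewrite /nuclear_pnorm.
set E := (X in inf X = _).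
have memE : E (\sum_(i < r) lambda i).
  exists r, lambda, (fun i _ => x i); split => //; split => //.
  by apply: eq_bigr => i _; rewrite ger0_norm.
have lbE : lbound E (\sum_(i < r) lambda i).
  move=> v [s [mu [y [hy [hT ->]]]]].
  have := congr1 (@diagL R n d) hT.
  rewrite !diagL_sum.
  have -> : \sum_(i < r) lambda i * \sum_(j < n) \prod_(k < d) x i 0 j
            = \sum_(i < r) lambda i.
    apply: eq_bigr => i _.
    rewrite -[RHS]mulr1; congr (_ * _); rewrite -[RHS](@pnorm1_sum _ _ _ _ d0 (hxn i)).
    apply: eq_bigr => j _; rewrite big_const_ord ger0_norm //; elim: (d) => [|m IH]; by rewrite /= ?IH ?exprS.
  move=> ->.
  apply: ler_sum => i _.
  apply: le_trans (ler_norm _) _.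
  rewrite normrM -[X in _ <= X]mulr1 ler_wpM2l //.
  apply: le_trans (ler_norm_sum _ _ _) _.
  apply: le_trans (@holder_d _ _ _ _ d0 (hy i)).
  by apply: ler_sum => j _; rewrite normr_prod.
apply/eqP; rewrite eq_le; apply/andP; split.
  apply: ge_inf => //; exists 0 => v [s [mu [y [_ [_ ->]]]]].
  by apply: sumr_ge0 => i _.
apply: (@lb_le_inf R E _ _ lbE); exists (\sum_(i < r) lambda i); exact: memE.
Qed.
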